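(* Let $n\ge 1$ and $d\ge 0$. For every polynomial $p\in\mathbb{R}[x]_d$, $x\in\mathbb{R}^n$, $$\|p\|_{\mathbb{R}[x]}\le 3^{d+1}\,\|p\|_{C([-1,1]^n)}.$$
   Context: $\mathbb{R}[x]_d$ is the space of real polynomials in $x\in\mathbb{R}^n$ of total degree at most $d$. For $p(x)=\sum_{|\alpha|\le d}\beta_\alpha x^\alpha$ (multi-indices $\alpha\in\mathbb{N}^n$, $|\alpha|=\sum_i\alpha_i$), $\|p\|_{\mathbb{R}[x]}:=\max_\alpha |\beta_\alpha|/\binom{|\alpha|}{\alpha}$ with $\binom{|\alpha|}{\alpha}=\frac{|\alpha|!}{\alpha_1!\cdots\alpha_n!}$. $\|p\|_{C(S)}=\max_{x\in S}|p(x)|$. *)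

(* Defs.v *)
From HB Require Import structures.
From mathcomp Require Import all_boot all_order all_algebra.
From mathcomp Require Import reals.
Set Implicit Arguments. Unset Strict Implicit. Unset Printing Implicit Defensive.
Import Order.TTheory GRing.Theory Num.Theory.
Local Open Scope ring_scope.

(* Multi-indices alpha in N^n with all entries <= d (enough for total degree <= d). *)
Definition midx (n d : nat) := {ffun 'I_n -> 'I_d.+1}.

Definition mdeg (n d : nat) (a : midx n d) : nat := (\sum_i (a i : nat))%N.

Definition multinom (R : realType) (n d : nat) (a : midx n d) : R :=
  ((mdeg a)`!)%:R / (\prod_i ((a i : nat)`!))%:R.

(* A polynomial p in R[x]_d, x in R^n, given by its coefficients beta_alpha, |alpha| <= d
   (coefficients at indices with |alpha| > d are ignored). *)
Definition peval (R : realType) (n d : nat) (beta : midx n d -> R) (x : 'I_n -> R) : R :=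
  \sum_(a : midx n d | (mdeg a <= d)%N) beta a * \prod_i x i ^+ (a i : nat).

Definition coef_norm (R : realType) (n d : nat) (beta : midx n d -> R) : R :=
  \big[Num.max/0]_(a : midx n d | (mdeg a <= d)%N) (`|beta a| / multinom R a).

(* Main.v *)
Require Import Defs.
From HB Require Import structures.
From mathcomp Require Import all_boot all_order all_algebra.
From mathcomp Require Import reals.
From mathcomp Require Import trigo.
From mathcomp Require Import ring lra zify.
Import Order.TTheory GRing.Theory Num.Theory.

Lemma ffact_split n p q : n ^_ (p + q) = n ^_ p * (n - p) ^_ q.
Proof.
elim: q => [|q IH]; first by rewrite addn0 ffactn0 muln1.
by rewrite addnS !ffactnSr IH subnDA mulnA.
Qed.

Lemma ffact_mono n1 n2 m : n1 <= n2 -> n1 ^_ m <= n2 ^_ m.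
Proof.
move=> le; rewrite !ffact_prod; apply: leq_prod => i _; exact: leq_sub2r.
Qed.

Lemma FF (I : Type) (r : seq I) (a : I -> nat) (s : nat) :
  \prod_(i <- r) (a i + s) ^_ (a i) <= (\sum_(i <- r) a i + s) ^_ (\sum_(i <- r) a i).
Proof.
elim: r => [|x r IH]; first by rewrite !big_nil.
rewrite !big_cons; set S := \sum_(i <- r) a i.
apply: (leq_trans (leq_mul (leqnn _) IH)).
rewrite ffact_split.
have -> : a x + S + s - a x = S + s by lia.
rewrite leq_mul2r; apply/orP; right; apply: ffact_mono; lia.
Qed.

Lemma B3 j s : 2 ^ j * 'C(j + s, j) <= 3 ^ (j + s).
Proof.
have -> : 3 = 1 + 2 by [].
rewrite expnDn (bigD1 (@Ordinal (j + s).+1 j (leq_addr s j))) //=.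
by rewrite exp1n mul1n mulnC leq_addr.
Qed.

Lemma NL (I : finType) (a : I -> nat) (s : nat) :
  \prod_i (2 ^ a i * 'C(a i + s, a i)) * \prod_i (a i)`!
    <= 3 ^ (\sum_i a i + s) * (\sum_i a i)`!.
Proof.
rewrite -big_split /=.
under eq_bigr => i _ do rewrite -mulnA bin_ffact.
rewrite big_split /= -expn_sum.
apply: (leq_trans (leq_mul (leqnn _) (FF _ (index_enum I) a s))).
rewrite -bin_ffact mulnA leq_mul2r; apply/orP; right; exact: B3.
Qed.

Local Open Scope ring_scope.

Lemma nat_ind2 (P : nat -> Prop) : P 0%N -> P 1%N ->
  (forall n, P n -> P n.+1 -> P n.+2) -> forall n, P n.
Proof.
move=> P0 P1 PS n; suff : P n /\ P n.+1 by case.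
elim: n => [|n [IH1 IH2]]; first by split.
by split => //; apply: PS.
Qed.

Section Cheb.
Variable R : realType.

Fixpoint chebp (n : nat) : {poly R} * {poly R} :=
  if n is n'.+1 then let p := chebp n' in (p.2, 'X * p.2 *+ 2 - p.1) else (1, 'X).
Definition cheb n := (chebp n).1.
Lemma cheb0 : cheb 0 = 1. Proof. by []. Qed.
Lemma cheb1 : cheb 1 = 'X. Proof. by []. Qed.
Lemma chebSS n : cheb n.+2 = 'X * cheb n.+1 *+ 2 - cheb n.
Proof. by []. Qed.

Lemma cheb_cos n t : (cheb n).[cos t] = cos (n%:R * t).
Proof.
elim/nat_ind2: n => [| |n IH1 IH2]; first by rewrite cheb0 hornerC mul0r cos0.
  by rewrite cheb1 hornerX mul1r.
rewrite chebSS hornerD hornerN hornerMn hornerM hornerX IH1 IH2.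
have -> : n.+2%:R * t = n.+1%:R * t + t by rewrite [n.+2%:R]mulrSr mulrDl mul1r.
have -> : n%:R * t = n.+1%:R * t - t by rewrite [n.+1%:R]mulrSr mulrDl mul1r addrK.
rewrite cosB cosD mulr2n; lra.
Qed.

Lemma cheb_coef n a : `|(cheb n)`_a| <= (2 ^ a * 'C(n, a))%:R.
Proof.
elim/nat_ind2: n a => [| |n IH1 IH2] a.
- rewrite cheb0 coefC; case: a => [|a] /=; first by rewrite normr1.
  by rewrite normr0 ler0n.
- rewrite cheb1 coefX; case: a => [|[|a]] /=; rewrite ?normr0 ?normr1 ?ler0n //.
  by rewrite bin1 muln1 ler1n.
rewrite chebSS coefB coefMn coefXM.
case: a => [|a] /=.
  rewrite mul0rn sub0r normrN; apply: (le_trans (IH1 0%N)).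
  by rewrite !bin0.
have H1 := IH2 a; have H0 := IH1 a.+1.
have H0' : `|(cheb n)`_a.+1| <= (2 ^ a.+1 * 'C(n.+1, a.+1))%:R.
  apply: (le_trans H0); rewrite ler_nat leq_mul2l; apply/orP; right.
  by apply: leq_bin2l.
apply: (le_trans (ler_normB _ _)).
rewrite normrMn binS mulnDr natrD expnS -mulnA natrM.
rewrite natrM in H1; rewrite !natrM in H0' *.
rewrite expnS natrM in H0'.
set u := (2 ^ a)%:R in H1 H0' *.
set c1 := 'C(n.+1, a)%:R in H1 *; set c2 := 'C(n.+1, a.+1)%:R in H0' *.
have -> : 2 * u * c1 = 2 * (u * c1) by rewrite mulrA.
rewrite -mulrA in H0'.
set P := u * c1 in H1 *; set Q := u * c2 in H0' *.
rewrite mulr2n; lra.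
Qed.

Lemma cheb_par n a : odd (n + a) -> (cheb n)`_a = 0.
Proof.
elim/nat_ind2: n a => [| |n IH1 IH2] a.
- by rewrite cheb0 coefC; case: a.
- by rewrite cheb1 coefX; case: a => [|[|a]].
rewrite chebSS coefB coefMn coefXM => H.
case: a H => [|a] /= H.
  rewrite mul0rn IH1 ?subr0 //; move: H; rewrite !oddD /=.
  by case: (odd n).
rewrite IH2 ?IH1 ?mul0rn ?subr0 //; move: H; rewrite !oddD /=;
  by case: (odd n); case: (odd a).
Qed.
End Cheb.
Lemma prod_XsubC_sign (R : realFieldType) (I : Type) (r : seq I) (Pr : pred I) (c : I -> R) :
  (forall j, Pr j -> 0 <= c j) -> forall i,
  0 <= (-1)^+(count Pr r + i) * (\prod_(j <- r | Pr j) ('X - (c j)%:P))`_i.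
Proof.
move=> hc; elim: r => [|x r IH] i.
  by rewrite big_nil coef1 /=; case: i => [|i] /=; rewrite ?mulr0 // mulr1 expr0.
rewrite big_cons /=; case hx: (Pr x) => /=; last by rewrite add0n; apply: IH.
rewrite mulrBl coefB coefXM coefCM.
set Q := \prod_(_ <- _ | _) _; set n := count Pr r.
have cx := hc x hx.
case: i => [|i] /=.
  have := IH 0%N; rewrite /= !addn0 add1n exprS sub0r mulrN => H.
  rewrite -/n -/Q in H; have := mulr_ge0 cx H; nra.
have H1 := IH i; have H2 := IH i.+1.
rewrite addnS exprS in H2.
rewrite add1n addSn addnS !exprS.
set e := (-1) ^+ (n + i) in H1 H2 *.
rewrite -/Q in H1 H2.
have -> : -1 * (-1 * e) * (Q`_i - c x * Q`_i.+1) = e * Q`_i + c x * (-1 * e * Q`_i.+1).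
  by ring.
by apply: addr_ge0 => //; apply: mulr_ge0.
Qed.


Section Lag.
Variables (R : realFieldType) (m : nat) (y : 'I_m.+1 -> R).
Hypothesis yinj : injective y.

Definition lnum (k : 'I_m.+1) : {poly R} := \prod_(j | j != k) ('X - (y j)%:P).
Definition lden (k : 'I_m.+1) : R := \prod_(j | j != k) (y k - y j).
Definition lag k := (lden k)^-1 *: lnum k.

Lemma lden_neq0 k : lden k != 0.
Proof.
apply/prodf_neq0 => j jk; rewrite subr_eq0; apply/negP => /eqP /yinj ekj.
by move: jk; rewrite ekj eqxx.
Qed.

Lemma lag_eval k l : (lag k).[y l] = (k == l)%:R.
Proof.
rewrite /lag hornerZ /lnum horner_prod.
case: (eqVneq k l) => [<-|kl].
  rewrite (eq_bigr (fun j => y k - y j)) => [|j _]; last by rewrite hornerXsubC.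
  by rewrite mulVf ?lden_neq0.
rewrite (bigD1 l) 1?eq_sym //= hornerXsubC subrr mul0r mulr0.
by [].
Qed.

Lemma size_lnum k : size (lnum k) = m.+1.
Proof.
rewrite /lnum -big_filter -(big_map y xpredT (fun x => 'X - x%:P)) size_prod_XsubC.
rewrite size_map size_filter.
transitivity #|predC1 k|.+1; last by rewrite cardC1 card_ord.
by rewrite cardE /enum_mem size_filter.
Qed.

Lemma lag_interp (P : {poly R}) : (size P <= m.+1)%N ->
  P = \sum_k P.[y k] *: lag k.
Proof.
move=> sP; apply/eqP; rewrite -subr_eq0; apply/eqP.
set Q := P - _.
have sQ : (size Q <= m.+1)%N.
  rewrite /Q; apply: (leq_trans (size_polyD _ _)); rewrite geq_max sP /=.
  rewrite size_polyN; apply: (leq_trans (size_sum _ _ _)).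
  apply/bigmax_leqP => k _; apply: (leq_trans (size_scale_leq _ _)).
  by apply: (leq_trans (size_scale_leq _ _)); rewrite size_lnum.
have rQ : forall l, root Q (y l).
  move=> l; rewrite /root /Q hornerD hornerN horner_sum.
  rewrite (bigD1 l) //= hornerZ lag_eval eqxx mulr1 big1 ?addr0 ?subrr //.
  by move=> k kl; rewrite hornerZ lag_eval (negbTE kl) mulr0.
apply/eqP; apply/negPn/negP => Qn0.
have := max_poly_roots Qn0 (rs := [seq y l | l <- enum 'I_m.+1]).
rewrite size_map size_enum_ord.
have H1 : all (root Q) [seq y l | l <- enum 'I_m.+1].
  by apply/allP => x /mapP [l _ ->]; apply: rQ.
have H2 : uniq [seq y l | l <- enum 'I_m.+1] by rewrite map_inj_uniq ?enum_uniq.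
move=> /(_ H1 H2) H; have := leq_trans H sQ; by rewrite ltnn.
Qed.

Lemma lag_coef (P : {poly R}) i : (size P <= m.+1)%N ->
  P`_i = \sum_k P.[y k] * (lag k)`_i.
Proof.
move=> sP; rewrite {1}(lag_interp P sP) coef_sum.
by apply: eq_bigr => k _; rewrite coefZ.
Qed.

Lemma lnum_sign k i : (forall j, 0 <= y j) -> 0 <= (-1)^+(m + i) * (lnum k)`_i.
Proof.
move=> hy; have := @prod_XsubC_sign R _ (index_enum 'I_m.+1) (fun j => j != k) y (fun j _ => hy j) i.
suff -> : count (fun j => j != k) (index_enum 'I_m.+1) = m by [].
transitivity #|predC1 k|; last by rewrite cardC1 card_ord.
by rewrite cardE /enum_mem size_filter.
Qed.

Hypothesis ydec : forall j k : 'I_m.+1, (j < k)%N -> y k < y j.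

Lemma lden_sign (k : 'I_m.+1) : 0 < (-1)^+k * lden k.
Proof.
have -> : (-1)^+k = \prod_(j < m.+1 | (j < k)%N) (-1 : R).
  have -> : (-1)^+k = \prod_(j < k) (-1 : R) by rewrite prodr_const card_ord.
  by rewrite (big_ord_widen_cond m.+1 xpredT (fun _ => (-1 : R))) // ltnW.
rewrite /lden [X in _ * X](bigID (fun j : 'I_m.+1 => (j < k)%N)) /= mulrA.
rewrite [X in _ * X * _](eq_bigl (fun j : 'I_m.+1 => (j < k)%N)); last first.
  by move=> j; case: (ltnP j k) => jk; rewrite ?andbT ?andbF // neq_ltn jk.
rewrite -big_split /=; apply: mulr_gt0; apply: prodr_gt0 => j.
  by move=> jk; rewrite mulN1r opprB subr_gt0; apply: ydec.
move=> /andP [jk]; rewrite -leqNgt => kj; rewrite subr_gt0; apply: ydec.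
by rewrite ltn_neqAle kj andbT eq_sym.
Qed.
End Lag.

Lemma cos_kpi (R : realType) k : cos (k%:R * pi) = (-1)^+k :> R.
Proof.
elim: k => [|k IH]; first by rewrite mul0r cos0 expr0.
by rewrite -addn1 natrD mulrDl mul1r cosDpi IH exprD expr1 mulrN1.
Qed.

Lemma frac_le (R : realFieldType) (k D : nat) : (k.*2 <= D)%N -> (k%:R / D%:R : R) <= 1/2.
Proof.
move=> kD; case: (posnP D) => [D0|Dp].
  by rewrite D0 invr0 mulr0; lra.
rewrite ler_pdivrMr ?ltr0n //.
have : (k.*2)%:R <= D%:R :> R by rewrite ler_nat.
rewrite -muln2 natrM; lra.
Qed.

Lemma frac_lt (R : realFieldType) (k D : nat) : (k.*2 < D)%N -> (k%:R / D%:R : R) < 1/2.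
Proof.
move=> kD; have Dp : (0 < D)%N by apply: leq_ltn_trans kD.
rewrite ltr_pdivrMr ?ltr0n //.
have : (k.*2)%:R < D%:R :> R by rewrite ltr_nat.
rewrite -muln2 natrM; lra.
Qed.

Section Univ.
Variables (R : realType) (D0 a : nat).
Hypothesis aD : (a <= D0)%N.

Let e := odd a.
Let i := a./2.
Let h := (D0 - a)./2.
Let m := (i + h)%N.
Let D := (a + h.*2)%N.

Lemma Ua : a = (i.*2 + e)%N.
Proof. by rewrite /i /e addnC odd_double_half. Qed.

Lemma UD : D = (m.*2 + e)%N.
Proof. rewrite /D /m doubleD {1}Ua; lia. Qed.

Lemma UDD0 : (D <= D0)%N.
Proof.
rewrite /D /h; have := odd_double_half (D0 - a); lia.
Qed.

Definition eta (k : nat) : R := cos (pi * (k%:R / D%:R)).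

Lemma eta_ge0 k : (k <= m)%N -> 0 <= eta k.
Proof.
move=> km; apply: cos_ge0_pihalf.
have h1 := frac_le R k D.
have h2 : (k.*2 <= D)%N by rewrite UD; lia.
have := h1 h2; have := pi_gt0 R.
have : 0 <= k%:R / D%:R :> R by rewrite divr_ge0.
move=> H0 Hp H1. apply/andP; split; nra.
Qed.

Lemma eta_gt0 k : e -> (k <= m)%N -> 0 < eta k.
Proof.
move=> he km; apply: cos_gt0_pihalf.
have h2 : (k.*2 < D)%N by rewrite UD he; lia.
have := frac_lt R k D h2; have := pi_gt0 R.
have : 0 <= k%:R / D%:R :> R by rewrite divr_ge0.
move=> H0 Hp H1. apply/andP; split; nra.
Qed.

Lemma eta_dec j k : (j < k)%N -> (k <= m)%N -> eta k < eta j.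
Proof.
move=> jk km.
have Dp : (0 < D)%N by rewrite UD; lia.
have hk := frac_le R k D.
have h2 : (k.*2 <= D)%N by rewrite UD; lia.
have := hk h2 => Hk.
have : 0 <= j%:R / D%:R :> R by rewrite divr_ge0.
have : j%:R / D%:R < k%:R / D%:R :> R by rewrite ltr_pM2r ?invr_gt0 ?ltr0n ?ltr_nat.
have := pi_gt0 R => Hp Hjk Hj0.
rewrite /eta ltr_cos ?in_itv /=.
- by rewrite ltr_pM2l.
- apply/andP; split; nra.
- apply/andP; split; nra.
Qed.

Lemma eta_le1 k : `|eta k| <= 1.
Proof. exact: cos_max. Qed.


Definition yy (k : 'I_m.+1) : R := eta k ^+ 2.

Lemma yy_dec : forall j k : 'I_m.+1, (j < k)%N -> yy k < yy j.
Proof.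
move=> j k jk; have km : (k <= m)%N by rewrite -ltnS ltn_ord.
have := eta_dec _ _ jk km; have := eta_ge0 _ km => H0 H1.
rewrite /yy; nra.
Qed.

Lemma yy_inj : injective yy.
Proof.
move=> j k E; apply/eqP; case: (ltngtP j k) => [jk|kj|/val_inj -> //].
- by have := yy_dec _ _ jk; rewrite E ltxx.
- by have := yy_dec _ _ kj; rewrite E ltxx.
Qed.

Lemma yy_ge0 k : 0 <= yy k.
Proof. exact: sqr_ge0. Qed.

Definition SS : {poly R} := \poly_(j < m.+1) (cheb R D)`_(j.*2 + e).

Lemma cheb_big n l : (n < l)%N -> (cheb R n)`_l = 0.
Proof.
move=> nl; apply/eqP; rewrite -normr_eq0 eq_le normr_ge0 andbT.
by apply: (le_trans (cheb_coef R n l)); rewrite bin_small // muln0.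
Qed.

Lemma cheb_SS : cheb R D = 'X^e * (SS \Po 'X^2).
Proof.
apply/polyP => l; rewrite coefXnM coef_comp_poly_Xn // coef_poly.
have oD : odd D = e by rewrite UD oddD odd_double /= /e; case: (odd a).
case: ltnP => le.
  apply: cheb_par; rewrite oddD oD; move: le; rewrite /e; case: (odd a) => //=.
  by rewrite ltnS leqn0 => /eqP ->.
have El : l = (e + (l - e))%N by rewrite subnKC.
case: ifP => [dv|ndv].
  case: ltnP => lm.
    congr _`_ _; move: dv; rewrite dvdn2 => ev.
    have := odd_double_half (l - e); rewrite (negbTE ev) add0n => E2.
    rewrite -divn2 in E2 *; rewrite E2 {1}El; lia.
  apply: cheb_big; move: dv; rewrite dvdn2 => ev.
  have := odd_double_half (l - e); rewrite (negbTE ev) add0n -divn2 => E2.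
  rewrite UD; move: lm; rewrite -ltnS in le; lia.
apply: cheb_par; move: ndv; rewrite dvdn2 => /negbFE od.
rewrite oddD oD.
have -> : odd l = e (+) odd (l - e) by rewrite {1}El oddD; case: (e).
by rewrite od; case: (e).
Qed.

Lemma cheb_eval x : (cheb R D).[x] = x ^+ e * SS.[x ^+ 2].
Proof. by rewrite cheb_SS hornerM hornerXn horner_comp hornerXn. Qed.

Lemma cheb_eta (k : nat) : (k <= m)%N -> (cheb R D).[eta k] = (-1) ^+ k.
Proof.
move=> km; rewrite /eta cheb_cos.
case: (posnP D) => [D0'|Dp].
  have k0 : k = 0%N by move: km; rewrite /m; move: D0'; rewrite UD; lia.
  rewrite D0' k0.
  by rewrite !mul0r cos0 expr0.
have -> : D%:R * (pi * (k%:R / D%:R)) = k%:R * pi :> R.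
  by field; rewrite pnatr_eq0 -lt0n.
exact: cos_kpi.
Qed.

Lemma SS_yy (k : 'I_m.+1) : SS.[yy k] = (-1) ^+ k / eta k ^+ e.
Proof.
have km : (k <= m)%N by rewrite -ltnS ltn_ord.
have ne : eta k ^+ e != 0.
  have := eta_gt0 k; rewrite /e; case: (odd a) => H; last by rewrite expr0 oner_eq0.
  by rewrite expr1 gt_eqF // (H isT km).
by rewrite -(cheb_eta k km) cheb_eval [eta k ^+ e * _]mulrC mulfK.
Qed.

Definition lam (k : 'I_m.+1) : R := (lag R m yy k)`_i.

Lemma exact_y j : (j <= m)%N -> \sum_k yy k ^+ j * lam k = (j == i)%:R.
Proof.
move=> jm.
have := lag_coef R m yy yy_inj ('X^j) i; rewrite size_polyXn ltnS => /(_ jm).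
rewrite coefXn eq_sym => ->; apply: eq_bigr => k _; by rewrite hornerXn.
Qed.

Lemma sign_sq n : ((-1) ^+ n) * ((-1) ^+ n) = 1 :> R.
Proof. by rewrite -exprD -signr_odd oddD addbb expr0. Qed.

Lemma lam_abs k : `|lam k| = (-1)^+(m + i) * ((-1)^+k * lam k).
Proof.
have HN := lnum_sign R m yy k i yy_ge0.
have HL := lden_sign R m yy yy_dec k.
set s := (-1) ^+ (m + i) in HN *; set t := (-1) ^+ k in HL *.
have hs : `|s| = 1 by rewrite normrX normrN1 expr1n.
have ht : `|t| = 1 by rewrite normrX normrN1 expr1n.
have tt1 : t * t = 1 by apply: sign_sq.
have Lne : lden R m yy k != 0 by apply: lden_neq0; apply: yy_inj.
have E : s * (t * lam k) = (s * (lnum R m yy k)`_i) / (t * lden R m yy k).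
  rewrite /lam /lag coefZ invfM.
  have -> : t^-1 = t by rewrite -[t^-1]mul1r -tt1 mulfK // -normr_eq0 ht oner_eq0.
  by ring.
have H0 : 0 <= s * (t * lam k) by rewrite E; apply: divr_ge0 => //; apply: ltW.
have : `|s * (t * lam k)| = `|lam k| by rewrite !normrM hs ht !mul1r.
by rewrite ger0_norm // => <-.
Qed.

Lemma cost_y : \sum_k `|lam k| / eta k ^+ e = (-1)^+(m + i) * SS`_i.
Proof.
rewrite (lag_coef R m yy yy_inj SS i (size_poly _ _)) mulr_sumr.
apply: eq_bigr => k _; rewrite lam_abs SS_yy /lam; by ring.
Qed.

Lemma SS_i : SS`_i = (cheb R D)`_a.
Proof.
rewrite coef_poly ltnS /m leq_addr; congr _`_ _.
by rewrite Ua.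
Qed.

Variable N : nat.
Hypothesis DN : (D0 < N)%N.

Lemma mN : (m < N)%N.
Proof. apply: leq_ltn_trans DN; apply: leq_trans UDD0; rewrite UD; lia. Qed.

Lemma sum_red (F : nat -> bool -> R) : (forall k s, (m < k)%N -> F k s = 0) ->
  \sum_(p : 'I_N * bool) F p.1 p.2 = \sum_(k < m.+1) (F k true + F k false).
Proof.
move=> HF; rewrite -(pair_bigA _ (fun (k : 'I_N) (s : bool) => F k s)) /=.
under eq_bigr do rewrite big_bool /=.
rewrite (big_ord_widen N (fun k => F k true + F k false) mN) [RHS]big_mkcond.
apply: eq_bigr => k _; case: ifP => // /negbT; rewrite -leqNgt => mk.
by rewrite /= !HF // addr0.
Qed.

Definition lamn (k : nat) : R := if (k < m.+1)%N then lam (inord k) else 0.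

Lemma eta_e_ne0 (k : 'I_m.+1) : eta k ^+ e != 0.
Proof.
have km : (k <= m)%N by rewrite -ltnS ltn_ord.
have := eta_gt0 k; rewrite /e; case: (odd a) => H; last by rewrite expr0 oner_eq0.
by rewrite expr1 gt_eqF // (H isT km).
Qed.

Lemma eta_e_ge0 (k : 'I_m.+1) : 0 <= eta k ^+ e.
Proof.
have km : (k <= m)%N by rewrite -ltnS ltn_ord.
by apply: exprn_ge0; apply: eta_ge0.
Qed.

Lemma univ_sec : exists t w : 'I_N * bool -> R,
   (forall p, -1 <= t p <= 1) /\
   (forall b, (b <= D0)%N -> \sum_p w p * t p ^+ b = (b == a)%:R) /\
   \sum_p `|w p| <= (2 ^ a * 'C(D0, a))%:R.
Proof.
pose tn := fun (k : nat) (s : bool) => if s then eta k else - eta k.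
pose wn := fun (k : nat) (s : bool) =>
  lamn k / eta k ^+ e / 2 * (if s then 1 else (-1) ^+ a).
exists (fun p : 'I_N * bool => tn p.1 p.2), (fun p : 'I_N * bool => wn p.1 p.2); split; [|split].
- move=> [k s]; rewrite /tn /eta /=; case: s => /=.
    by rewrite cos_geN1 cos_le1.
  by rewrite lerN2 lerNl cos_geN1 cos_le1.
- move=> b bD.
  rewrite (sum_red (fun k s => wn k s * tn k s ^+ b)); last first.
    by move=> k s mk; rewrite /wn /lamn /= ltnNge mk /= !mul0r.
  have Hterm : forall k : 'I_m.+1, wn k true * tn k true ^+ b
     + wn k false * tn k false ^+ b
     = lam k / eta k ^+ e * eta k ^+ b * ((1 + (-1) ^+ (a + b)) / 2).
    move=> k; rewrite /wn /tn /lamn /= ltn_ord inord_val [(- eta k) ^+ b]exprNn exprD; by ring.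
  under eq_bigr do rewrite Hterm.
  case: (boolP (odd (a + b))) => hab.
    rewrite -signr_odd hab expr1 subrr mul0r.
    have -> : (b == a) = false.
      by apply/negbTE/eqP => ba; move: hab; rewrite ba addnn odd_double.
    by rewrite big1 // => k _; rewrite mulr0.
  have -> : (1 + (-1) ^+ (a + b)) / 2 = 1 :> R.
    by rewrite -signr_odd (negbTE hab) expr0; field.
  have ob : odd b = e by move: hab; rewrite oddD /e; case: (odd a); case: (odd b).
  have Eb := odd_double_half b; rewrite ob in Eb.
  have Ea := Ua; have Ef := odd_double_half (D0 - a).
  have jm : (b./2 <= m)%N.
    rewrite /m /h; move: bD Eb Ea Ef; rewrite /i /e.
    have := leq_b1 (odd (D0 - a)); have := leq_b1 (odd a); lia.
  have -> : (b == a) = (b./2 == i).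
    by apply/eqP/eqP => H; move: Eb Ea; rewrite /i; lia.
  rewrite -(exact_y _ jm); apply: eq_bigr => k _.
have Hb : eta k ^+ b = eta k ^+ e * yy k ^+ b./2.
    by rewrite /yy -exprM -exprD mul2n Eb.
  by rewrite mulr1 Hb mulrA divfK ?eta_e_ne0 // mulrC.
- rewrite (sum_red (fun k s => `|wn k s|)); last first.
    by move=> k s mk; rewrite /wn /lamn /= ltnNge mk /= !mul0r normr0.
  have Hterm : forall k : 'I_m.+1, `|wn k true| + `|wn k false| = `|lam k| / eta k ^+ e.
    move=> k; rewrite /wn /lamn /= ltn_ord inord_val !normrM normrX normrN1 expr1n.
    rewrite !normfV (ger0_norm (eta_e_ge0 k)) normr1 (ger0_norm (ler0n _ 2)).
    rewrite !mulr1; set X := `|lam k| / _; lra.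
  under eq_bigr do rewrite Hterm.
  rewrite cost_y; apply: (le_trans (ler_norm _)).
  rewrite normrM normrX normrN1 expr1n mul1r SS_i.
  apply: (le_trans (cheb_coef R D a)); rewrite ler_nat leq_mul2l; apply/orP; right.
  exact: leq_bin2l UDD0.
Qed.

End Univ.

Section Main.
Variables (R : realType) (n d : nat) (beta : midx n d -> R) (M : R).
Hypothesis HM : forall x : 'I_n -> R, (forall i, -1 <= x i <= 1) -> `|peval beta x| <= M.

Lemma M_ge0 : 0 <= M.
Proof.
apply: le_trans (HM (fun _ => 0) _); first exact: normr_ge0.
by move=> i; rewrite lerN10 ler01.
Qed.

Lemma coef_bound (al : midx n d) : (mdeg al <= d)%N ->
  `|beta al| <= M * (\prod_i (2 ^ (al i : nat) * 'C(al i + (d - mdeg al), al i)))%N%:R.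
Proof.
move=> Hal; set s := (d - mdeg al)%N.
pose J := ('I_d.+1 * bool)%type.
have ex : forall i : 'I_n, exists tw : (J -> R) * (J -> R),
   (forall p, -1 <= tw.1 p <= 1) /\
   (forall b, (b <= al i + s)%N -> \sum_p tw.2 p * tw.1 p ^+ b = (b == al i)%:R) /\
   \sum_p `|tw.2 p| <= (2 ^ al i * 'C(al i + s, al i))%:R.
  move=> i; have ai : (al i <= al i + s)%N := leq_addr _ _.
  have aim : (al i <= mdeg al)%N by rewrite /mdeg (bigD1 i) //= leq_addr.
  have ds : (al i + s < d.+1)%N by rewrite ltnS /s; lia.
  have [t [w [H1 [H2 H3]]]] := univ_sec R (al i + s) (al i) ai (d.+1) ds.
  by exists (t, w).
have [tw Htw] := fin_all_exists ex.
pose T i := (tw i).1; pose W i := (tw i).2.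
set G := \sum_(f : {ffun 'I_n -> J}) (\prod_i W i (f i)) * peval beta (fun i => T i (f i)).
have key : forall b : midx n d, (mdeg b <= d)%N ->
    \prod_i (\sum_p W i p * T i p ^+ b i) = (b == al)%:R.
  move=> b Hb; case: (eqVneq b al) => [->|nb].
    rewrite big1 // => i _.
    by have := (Htw i).2.1 (al i) (leq_addr _ _); rewrite eqxx.
  case: (pickP (fun i => ((b i : nat) != al i) && (b i <= al i + s)%N)) => [i0 /andP [ne le] | none].
    rewrite (bigD1 i0) //= (Htw i0).2.1 // (negbTE ne) mul0r //.
  exfalso.
  case: (pickP (fun i => ((b i : nat) != al i))) => [i1 ni1 | eqall]; last first.
    move/eqP: nb; apply; apply/ffunP => i; apply/val_inj/eqP.
    by have := eqall i => /= /negbFE.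
  have big1 : (al i1 + s < b i1)%N.
    by have := none i1; rewrite /= ni1 /= ltnNge => ->.
  have ge : forall i, (al i <= b i)%N.
    move=> i; case: (eqVneq (b i : nat) (al i)) => [-> //| ne].
    move: (none i); rewrite /= ne /= => /negbT; rewrite -ltnNge => H.
    by apply: ltnW; apply: leq_ltn_trans H; exact: leq_addr.
  have : (mdeg al + s < mdeg b)%N.
    rewrite /mdeg (bigD1 i1) //= [X in (_ < X)%N](bigD1 i1) //=.
    have : (\sum_(i | i != i1) (al i : nat) <= \sum_(i | i != i1) (b i : nat))%N.
      by apply: leq_sum => i _; apply: ge.
    by move=> HH; rewrite addnAC -addSn; apply: leq_add.
  rewrite /s; lia.
have G1 : G = beta al.
  rewrite /G /peval.
  under eq_bigr => f _ do rewrite mulr_sumr.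
  rewrite exchange_big /=.
  transitivity (\sum_(b | (mdeg b <= d)%N) beta b * \prod_i \sum_p W i p * T i p ^+ b i).
    apply: eq_bigr => b _; rewrite bigA_distr_bigA mulr_sumr; apply: eq_bigr => f _.
    by rewrite big_split /= mulrCA.
  rewrite (bigD1 al) //= key // eqxx mulr1 big1 ?addr0 // => b /andP [Hb nb].
  by rewrite key // (negbTE nb) mulr0.
have G2 : `|G| <= M * \prod_i \sum_p `|W i p|.
  rewrite /G; apply: le_trans (ler_norm_sum _ _ _) _.
  rewrite bigA_distr_bigA mulr_sumr; apply: ler_sum => f _.
  rewrite normrM normr_prod mulrC; apply: ler_wpM2r.
    by apply: prodr_ge0 => i _; apply: normr_ge0.
  by apply: HM => i; apply: (Htw i).1.
rewrite -G1; apply: (le_trans G2); apply: ler_wpM2l; first exact: M_ge0.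
rewrite natr_prod; apply: ler_prod => i _; apply/andP; split.
  by apply: sumr_ge0 => p _; apply: normr_ge0.
exact: (Htw i).2.2.
Qed.
End Main.

Theorem lemma1 (R : realType) (n d : nat) (hn : (1 <= n)%N) (beta : midx n d -> R) (M : R) :
  (forall x : 'I_n -> R, (forall i, -1 <= x i <= 1) -> `|peval beta x| <= M) ->
  coef_norm beta <= 3 ^+ d.+1 * M.
Proof.
move=> HM; have M0 := @M_ge0 _ _ _ _ _ HM.
rewrite /coef_norm; apply: bigmax_le => [|al Hal].
  by apply: mulr_ge0 => //; apply: exprn_ge0.
have Hb := @coef_bound _ _ _ _ _ HM al Hal.
set P := (\prod_i _)%N in Hb.
have NLi := NL _ (fun i => nat_of_ord (al i)) (d - mdeg al).
rewrite -/P in NLi.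
have Ed : (mdeg al + (d - mdeg al))%N = d by rewrite subnKC.
rewrite -/(mdeg al) Ed in NLi.
set Q := (\prod_i (al i : nat)`!)%N in NLi.
have Jp : (0 < (mdeg al)`!)%N := fact_gt0 _.
have Qp : (0 < Q)%N by rewrite /Q; apply: prodn_gt0 => i; apply: fact_gt0.
rewrite /multinom invf_div mulrA ler_pdivrMr ?ltr0n //.
apply: (le_trans (ler_wpM2r (ler0n _ Q) Hb)).
rewrite -mulrA -natrM.
have NLr : ((P * Q)%N%:R : R) <= (3 ^ d * (mdeg al)`!)%N%:R by rewrite ler_nat.
apply: (le_trans (ler_wpM2l M0 NLr)).
rewrite natrM natrX mulrA [M * _]mulrC exprS.
apply: ler_wpM2r; first exact: ler0n.
rewrite -mulrA ler_peMl //; last by rewrite ler1n.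
by apply: mulr_ge0 => //; apply: exprn_ge0.
Qed.
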